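(* Let $\mu>1$, $\gamma=\mu\gamma^N_1$, let $p\ge2$ and $q=p/(p-1)$, and let $(\rho_k)_{k\ge1}$ be an increasing positive sequence with $K_q<\infty$. Then there exists a constant $B_p<\infty$ (depending on $p,\mu,(\rho_k)$ but not on $N$ or $\delta$) such that for all $N\ge3$, all $\delta>0$ and all $z\in C_\delta$, $$\|x(Nz)\|_p^p\le\delta^p\,N\,B_p.$$
   Context: $\gamma^N_1=\frac1{2\sin^2(\pi/N)}$; $\lambda_{k,N}=-1+2\gamma\sin^2(k\pi/N)$ for $0\le k\le N-1$ (indices modulo $N$). $\omega=e^{2\pi i/N}$. $\widehat{\mathbb{R}}^N=\{z\in\mathbb{C}^N:z_k=\overline{z_{N-k}}\ \forall k\}$ (so $z_0\in\mathbb{R}$). For $z\in\widehat{\mathbb{R}}^N$, $x(Nz)\in\mathbb{R}^N$ has components $x_j(Nz)=\sum_{k=0}^{N-1}\omega^{jk}z_k$ (inverse map: $z_k=\frac1N\sum_j\omega^{-jk}x_j$). Given an increasing positive sequence $(\rho_k)_{k\ge1}$, set $r_{0,N}=1$ and $r_{k,N}=r_{N-k,N}=\rho_k$ for $1\le k\le\lfloor N/2\rfloor$; $K_p=\big(\sum_{k\ge1}\rho_k^p/k^p\big)^{1/p}$; for $\delta>0$, $C_\delta=\{z\in\widehat{\mathbb{R}}^N:|z_k|\le\delta\,r_{k,N}/\sqrt{|\lambda_{k,N}|},\ 0\le k\le N-1\}$. $\|y\|_p=(\sum_j|y_j|^p)^{1/p}$. *)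

(* Defs.v *)
From Stdlib Require Import Reals Lra Lia Arith.
Open Scope R_scope.

Fixpoint sumN (n : nat) (f : nat -> R) : R :=
  match n with
  | O => 0
  | S m => sumN m f + f m
  end.

(* real power x^p for x >= 0, with the convention 0^p = 0 (p > 0) *)
Definition rpow (x p : R) : R := if Rle_dec x 0 then 0 else Rpower x p.

Definition cmod (a b : R) : R := sqrt (a * a + b * b).

Definition gamma1 (N : nat) : R := / (2 * (sin (PI / INR N)) ^ 2).

Definition lambda (gamma : R) (N k : nat) : R :=
  -1 + 2 * gamma * (sin (INR k * PI / INR N)) ^ 2.

Definition rkN (rho : nat -> R) (N k : nat) : R :=
  if Nat.eqb k 0 then 1 else rho (Nat.min k (N - k)).

(* z in \hat R^N, given by real parts a and imaginary parts b on indices 0..N-1: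
   z_k = conj (z_{N-k}) with indices modulo N *)
Definition in_Rhat (N : nat) (a b : nat -> R) : Prop :=
  forall k, (k < N)%nat ->
    a k = a ((N - k) mod N)%nat /\ b k = - b ((N - k) mod N)%nat.

Definition in_Cdelta (gamma : R) (rho : nat -> R) (delta : R) (N : nat)
    (a b : nat -> R) : Prop :=
  in_Rhat N a b /\
  forall k, (k < N)%nat ->
    cmod (a k) (b k) <= delta * rkN rho N k / sqrt (Rabs (lambda gamma N k)).

(* x_j(Nz) = sum_k omega^{jk} z_k, omega = exp(2 pi i / N): real and imaginary parts *)
Definition xre (N : nat) (a b : nat -> R) (j : nat) : R :=
  sumN N (fun k => a k * cos (2 * PI * INR (j * k) / INR N)
                 - b k * sin (2 * PI * INR (j * k) / INR N)).
Definition xim (N : nat) (a b : nat -> R) (j : nat) : R :=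
  sumN N (fun k => a k * sin (2 * PI * INR (j * k) / INR N)
                 + b k * cos (2 * PI * INR (j * k) / INR N)).

Definition xnorm_pp (N : nat) (a b : nat -> R) (p : R) : R :=
  sumN N (fun j => rpow (cmod (xre N a b j) (xim N a b j)) p).

Definition Kq_finite (rho : nat -> R) (q : R) : Prop :=
  exists l, Un_cv (fun n => sum_f_R0 (fun k => rpow (rho (S k) / INR (S k)) q) n) l.

(* Main.v *)
Require Import Defs.
From Stdlib Require Import Reals Lra Lia Arith Factorial.
Open Scope R_scope.

Lemma sumN_ext n f g : (forall k, (k < n)%nat -> f k = g k) -> sumN n f = sumN n g.
Proof. induction n; simpl; intros H; auto. rewrite IHn, H; auto. Qed.

Lemma sumN_le n f g : (forall k, (k < n)%nat -> f k <= g k) -> sumN n f <= sumN n g.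
Proof. induction n; simpl; intros H; [lra|]. pose proof (H n ltac:(lia)). assert (sumN n f <= sumN n g) by (apply IHn; intros; apply H; lia). lra. Qed.

Lemma sumN_nonneg n f : (forall k, (k < n)%nat -> 0 <= f k) -> 0 <= sumN n f.
Proof. intros H. replace 0 with (sumN n (fun _ => 0)). apply sumN_le; auto.
  clear H; induction n; simpl; auto; lra. Qed.

Lemma sumN_plus n f g : sumN n (fun k => f k + g k) = sumN n f + sumN n g.
Proof. induction n; simpl; [lra|]. rewrite IHn; lra. Qed.

Lemma sumN_minus n f g : sumN n (fun k => f k - g k) = sumN n f - sumN n g.
Proof. induction n; simpl; [lra|]. rewrite IHn; lra. Qed.

Lemma sumN_scal n c f : sumN n (fun k => c * f k) = c * sumN n f.
Proof. induction n; simpl; [lra|]. rewrite IHn; lra. Qed.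

Lemma sumN_const n c : sumN n (fun _ => c) = INR n * c.
Proof. induction n; simpl sumN; [simpl; lra|]. rewrite IHn, S_INR; lra. Qed.

Lemma sumN_swap n m (f : nat -> nat -> R) :
  sumN n (fun i => sumN m (fun j => f i j)) = sumN m (fun j => sumN n (fun i => f i j)).
Proof. induction n; simpl. - induction m; simpl; auto; lra.
  - rewrite IHn, <- sumN_plus. reflexivity. Qed.

Lemma sumN_tel n (F : nat -> R) : sumN n (fun j => F (S j) - F j) = F n - F O.
Proof. induction n; simpl; [lra|]. rewrite IHn; lra. Qed.

Lemma sumN_mul n m f g : sumN n f * sumN m g = sumN n (fun k => sumN m (fun l => f k * g l)).
Proof. induction n; simpl; [lra|]. rewrite <- IHn, sumN_scal. lra. Qed.

Lemma sumN_delta n k (g : nat -> R) : (k < n)%nat ->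
  sumN n (fun l => if Nat.eq_dec k l then g l else 0) = g k.
Proof. induction n; intros H; [lia|]. simpl. destruct (Nat.eq_dec k n).
  - subst. rewrite (sumN_ext n _ (fun _ => 0)). rewrite sumN_const; lra.
    intros l Hl. destruct (Nat.eq_dec n l); [lia|auto].
  - rewrite IHn by lia. lra. Qed.

Lemma sumN_shift n f : sumN (S n) f = f O + sumN n (fun k => f (S k)).
Proof. induction n; [simpl; lra|].
  change (sumN (S (S n)) f) with (sumN (S n) f + f (S n)). rewrite IHn. simpl. lra. Qed.

Lemma sumN_refl n f : sumN n f = sumN n (fun k => f (n - 1 - k)%nat).
Proof. induction n; auto. rewrite (sumN_shift n (fun k => f (S n - 1 - k)%nat)). change (sumN (S n) f) with (sumN n f + f n).
  rewrite IHn. replace (S n - 1 - 0)%nat with n by lia. rewrite Rplus_comm. f_equal.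
  apply sumN_ext. intros k Hk. f_equal. lia. Qed.

Lemma sumN_sum_f n g : sumN (S n) g = sum_f_R0 g n.
Proof. induction n; [simpl; lra|]. change (sumN (S (S n)) g) with (sumN (S n) g + g (S n)).
  rewrite IHn. simpl. lra. Qed.

Lemma rpow_pos x e : 0 < x -> rpow x e = Rpower x e.
Proof. intros H. unfold rpow. destruct (Rle_dec x 0); [lra|auto]. Qed.

Lemma rpow_nonpos x e : x <= 0 -> rpow x e = 0.
Proof. intros H. unfold rpow. destruct (Rle_dec x 0); [auto|lra]. Qed.

Lemma rpow_gt0 x e : 0 < x -> 0 < rpow x e.
Proof. intros H. rewrite rpow_pos by auto. unfold Rpower. apply exp_pos. Qed.

Lemma rpow_ge0 x e : 0 <= rpow x e.
Proof. destruct (Rle_dec x 0). rewrite rpow_nonpos; lra. left; apply rpow_gt0; lra. Qed.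

Lemma rpow_le x y e : 0 <= e -> x <= y -> rpow x e <= rpow y e.
Proof. intros He H. destruct (Rle_dec x 0). rewrite (rpow_nonpos x) by auto. apply rpow_ge0.
  rewrite !rpow_pos by lra. apply Rle_Rpower_l; lra. Qed.

Lemma rpow_lt x y e : 0 < e -> 0 <= x -> x < y -> rpow x e < rpow y e.
Proof. intros He Hx H. destruct (Rle_dec x 0). rewrite (rpow_nonpos x) by auto. apply rpow_gt0; lra.
  rewrite !rpow_pos by lra. apply Rlt_Rpower_l; lra. Qed.

Lemma rpow_mult x y e : 0 <= x -> 0 <= y -> rpow (x * y) e = rpow x e * rpow y e.
Proof. intros Hx Hy. destruct (Req_dec x 0). subst. rewrite Rmult_0_l, rpow_nonpos; try ring; lra.
  destruct (Req_dec y 0). subst. rewrite Rmult_0_r, (rpow_nonpos 0); try ring; lra.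
  rewrite !rpow_pos by (try apply Rmult_lt_0_compat; lra).
  rewrite Rpower_mult_distr; auto; lra. Qed.

Lemma rpow_plus x e1 e2 : 0 <= x -> rpow x (e1 + e2) = rpow x e1 * rpow x e2.
Proof. intros Hx. destruct (Req_dec x 0). subst. rewrite !rpow_nonpos; lra.
  rewrite !rpow_pos by lra. apply Rpower_plus. Qed.

Lemma rpow_rpow x e1 e2 : 0 <= x -> rpow (rpow x e1) e2 = rpow x (e1 * e2).
Proof. intros Hx. destruct (Req_dec x 0). subst.
  rewrite (rpow_nonpos 0 e1), (rpow_nonpos 0 e2), (rpow_nonpos 0 (e1*e2)); lra.
  rewrite (rpow_pos (rpow x e1)) by (apply rpow_gt0; lra).
  rewrite !rpow_pos by lra. apply Rpower_mult. Qed.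

Lemma rpow_1 x : 0 <= x -> rpow x 1 = x.
Proof. intros Hx. destruct (Req_dec x 0). subst. rewrite !rpow_nonpos; lra.
  rewrite rpow_pos by lra. apply Rpower_1; lra. Qed.

Lemma rpow_2 x : 0 <= x -> rpow x 2 = x * x.
Proof. intros Hx. destruct (Req_dec x 0). subst. rewrite !rpow_nonpos; lra.
  rewrite rpow_pos by lra. replace 2 with (INR 2) by (simpl; lra). rewrite Rpower_pow by lra.
  simpl; ring. Qed.

Lemma rpow_inv x e : 0 < x -> rpow (/ x) e = / rpow x e.
Proof. intros Hx. rewrite !rpow_pos by (try apply Rinv_0_lt_compat; lra).
  unfold Rpower. rewrite ln_Rinv by auto. rewrite <- exp_Ropp. f_equal. ring. Qed.

Lemma rpow_2x e : 0 < e -> 1 < rpow 2 e.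
Proof. intros He. rewrite rpow_pos by lra. unfold Rpower.
  replace 1 with (exp 0) by apply exp_0. apply exp_increasing.
  assert (0 < ln 2). { rewrite <- ln_1. apply ln_increasing; lra. } nra. Qed.

Lemma rpow_mono_e x e1 e2 : 1 <= x -> e1 <= e2 -> rpow x e1 <= rpow x e2.
Proof. intros. rewrite !rpow_pos by lra. apply Rle_Rpower; auto. Qed.

Lemma cmod_ge0 a b : 0 <= cmod a b.
Proof. unfold cmod. apply sqrt_pos. Qed.

Lemma cmod_sq a b : cmod a b * cmod a b = a * a + b * b.
Proof. unfold cmod. apply sqrt_sqrt. nra. Qed.

Lemma cmod_triangle a b c d : cmod (a + c) (b + d) <= cmod a b + cmod c d.
Proof.
  pose proof (cmod_sq a b). pose proof (cmod_sq c d). pose proof (cmod_sq (a+c) (b+d)).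
  pose proof (cmod_ge0 a b). pose proof (cmod_ge0 c d). pose proof (cmod_ge0 (a+c) (b+d)).
  set (u := cmod a b) in *. set (v := cmod c d) in *. set (w := cmod (a+c) (b+d)) in *.
  assert (Hcs : (a*c+b*d)*(a*c+b*d) <= (u*v)*(u*v)).
  { replace ((u*v)*(u*v)) with ((u*u)*(v*v)) by ring. rewrite H, H0.
    assert (E: (a*a+b*b)*(c*c+d*d) = (a*c+b*d)*(a*c+b*d) + (a*d-b*c)*(a*d-b*c)) by ring.
    rewrite E. pose proof (Rle_0_sqr (a*d-b*c)). unfold Rsqr in *. lra. }
  assert (Huv : 0 <= u*v) by (apply Rmult_le_pos; auto).
  assert (a*c+b*d <= u*v).
  { destruct (Rle_dec (a*c+b*d) (u*v)) as [|Hn]; auto. exfalso.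
    assert (u*v < a*c+b*d) by lra.
    assert ((u*v)*(u*v) < (a*c+b*d)*(a*c+b*d)). apply Rmult_le_0_lt_compat; lra. lra. }
  assert (w*w <= (u+v)*(u+v)) by nra.
  destruct (Rle_dec w (u+v)) as [|Hn]; auto. exfalso.
  assert ((u+v)*(u+v) < w*w). apply Rmult_le_0_lt_compat; lra. lra.
Qed.

Lemma cmod_rot a b C S : C * C + S * S = 1 -> cmod (a * C - b * S) (a * S + b * C) = cmod a b.
Proof. intros H. unfold cmod. f_equal.
  replace ((a * C - b * S) * (a * C - b * S) + (a * S + b * C) * (a * S + b * C))
    with ((a*a+b*b)*(C*C+S*S)) by ring. rewrite H; ring. Qed.

Lemma cmod_sum n f g : cmod (sumN n f) (sumN n g) <= sumN n (fun k => cmod (f k) (g k)).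
Proof. induction n; simpl. unfold cmod. rewrite Rmult_0_l, Rplus_0_l, sqrt_0; lra.
  eapply Rle_trans. apply cmod_triangle. lra. Qed.

Lemma cmod_zero a b : cmod a b = 0 -> a = 0 /\ b = 0.
Proof. intros H. pose proof (cmod_sq a b). rewrite H in H0. split; nra. Qed.

Lemma cmod_00 : cmod 0 0 = 0.
Proof. unfold cmod. rewrite Rmult_0_l, Rplus_0_l, sqrt_0; lra. Qed.

Lemma cos_sum_tel n h :
  sumN n (fun j => cos (2 * h * INR j)) * (2 * sin h) = sin (2 * h * INR n - h) + sin h.
Proof.
  rewrite Rmult_comm, <- sumN_scal.
  rewrite (sumN_ext n _ (fun j => sin (2 * h * INR (S j) - h) - sin (2 * h * INR j - h))).
  rewrite (sumN_tel n (fun j => sin (2*h*INR j - h))). simpl INR. replace (2*h*0-h) with (-h) by ring. rewrite sin_neg. ring.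
  intros j _. rewrite S_INR.
  replace (2 * h * (INR j + 1) - h) with (2*h*INR j + h) by ring.
  rewrite sin_plus, sin_minus. ring.
Qed.

Lemma sin_sum_tel n h :
  sumN n (fun j => sin (2 * h * INR j)) * (2 * sin h) = cos h - cos (2 * h * INR n - h).
Proof.
  rewrite Rmult_comm, <- sumN_scal.
  rewrite (sumN_ext n _ (fun j => cos (2 * h * INR j - h) - cos (2 * h * INR (S j) - h))).
  rewrite (sumN_minus n (fun j => cos (2 * h * INR j - h)) (fun j => cos (2 * h * INR (S j) - h))).
  assert (T := sumN_tel n (fun j => cos (2 * h * INR j - h))). cbv beta in T.
  rewrite (sumN_minus n (fun j => cos (2 * h * INR (S j) - h)) (fun j => cos (2 * h * INR j - h))) in T.
  replace (2*h*INR 0-h) with (-h) in T by (simpl; ring). rewrite cos_neg in T. lra.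
  intros j _. rewrite S_INR.
  replace (2 * h * (INR j + 1) - h) with (2*h*INR j + h) by ring.
  rewrite cos_plus, cos_minus. ring.
Qed.

Lemma sin_2per x k l : sin (x + 2 * INR k * PI - 2 * INR l * PI) = sin x.
Proof. rewrite <- (sin_period (x + 2 * INR k * PI - 2 * INR l * PI) l).
  replace (x + 2 * INR k * PI - 2 * INR l * PI + 2 * INR l * PI) with (x + 2 * INR k * PI) by ring.
  apply sin_period. Qed.

Lemma cos_2per x k l : cos (x + 2 * INR k * PI - 2 * INR l * PI) = cos x.
Proof. rewrite <- (cos_period (x + 2 * INR k * PI - 2 * INR l * PI) l).
  replace (x + 2 * INR k * PI - 2 * INR l * PI + 2 * INR l * PI) with (x + 2 * INR k * PI) by ring.
  apply cos_period. Qed.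

Lemma trig_sums N k l : (k < N)%nat -> (l < N)%nat -> k <> l ->
  let h := PI * (INR k - INR l) / INR N in
  sumN N (fun j => cos (2 * h * INR j)) = 0 /\ sumN N (fun j => sin (2 * h * INR j)) = 0.
Proof.
  intros Hk Hl Hkl h.
  assert (HN : 0 < INR N) by (apply lt_0_INR; lia).
  assert (Hsh : sin h <> 0).
  { assert (INR k < INR N) by (apply lt_INR; auto).
    assert (INR l < INR N) by (apply lt_INR; auto).
    assert (0 <= INR k) by apply pos_INR. assert (0 <= INR l) by apply pos_INR.
    pose proof PI_RGT_0.
    set (r := (INR k - INR l) / INR N).
    assert (Hr : r * INR N = INR k - INR l) by (unfold r; field; lra).
    assert (Hh : h = PI * r) by (unfold h, r; field; lra).
    destruct (proj1 (Nat.lt_gt_cases k l) Hkl) as [Hc|Hc].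
    - apply lt_INR in Hc. assert (-1 < r < 0) by nra.
      apply Rlt_not_eq. rewrite Hh. apply sin_lt_0_var; nra.
    - apply lt_INR in Hc. assert (0 < r < 1) by nra.
      apply Rgt_not_eq. rewrite Hh. apply sin_gt_0; nra. }
  assert (E : 2 * h * INR N - h = - h + 2 * INR k * PI - 2 * INR l * PI).
  { unfold h. field. lra. }
  split.
  - pose proof (cos_sum_tel N h) as T. rewrite E, sin_2per, sin_neg in T.
    replace (- sin h + sin h) with 0 in T by ring.
    apply Rmult_integral in T. destruct T as [T|T]; auto. exfalso; apply Hsh; lra.
  - pose proof (sin_sum_tel N h) as T. rewrite E, cos_2per, cos_neg in T.
    replace (cos h - cos h) with 0 in T by ring.
    apply Rmult_integral in T. destruct T as [T|T]; auto. exfalso; apply Hsh; lra.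
Qed.

Definition ang (N j k : nat) : R := 2 * PI * INR (j * k) / INR N.

Lemma expand_sq N a b j :
  xre N a b j * xre N a b j + xim N a b j * xim N a b j =
  sumN N (fun k => sumN N (fun l =>
     (a k * a l + b k * b l) * cos (ang N j k - ang N j l)
   + (a k * b l - b k * a l) * sin (ang N j k - ang N j l))).
Proof. unfold xre, xim. rewrite !sumN_mul, <- sumN_plus. apply sumN_ext. intros k _.
  rewrite <- sumN_plus. apply sumN_ext. intros l _. unfold ang.
  rewrite cos_minus, sin_minus. ring. Qed.

Lemma parseval N a b : (1 <= N)%nat ->
  sumN N (fun j => xre N a b j * xre N a b j + xim N a b j * xim N a b j) =
  INR N * sumN N (fun k => a k * a k + b k * b k).
Proof.
  intros HN1. assert (HN : 0 < INR N) by (apply lt_0_INR; lia).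
  rewrite (sumN_ext N _ _ (fun j _ => expand_sq N a b j)).
  rewrite sumN_swap. rewrite <- sumN_scal. apply sumN_ext. intros k Hk.
  rewrite sumN_swap.
  rewrite (sumN_ext N _ (fun l => if Nat.eq_dec k l then INR N * (a l * a l + b l * b l) else 0)).
  rewrite sumN_delta; auto.
  intros l Hl.
  set (h := PI * (INR k - INR l) / INR N).
  rewrite (sumN_ext N _ (fun j => (a k * a l + b k * b l) * cos (2 * h * INR j)
     + (a k * b l - b k * a l) * sin (2 * h * INR j))).
  2:{ intros j _. assert (E : ang N j k - ang N j l = 2 * h * INR j).
      { unfold ang, h. rewrite !mult_INR. field. lra. } rewrite E. reflexivity. }
  rewrite sumN_plus, !sumN_scal.
  destruct (Nat.eq_dec k l) as [->|Hne].
  - unfold h. replace (PI * (INR l - INR l) / INR N) with 0 by (field; lra).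
    rewrite (sumN_ext N (fun j => cos (2 * 0 * INR j)) (fun _ => 1)).
    rewrite (sumN_ext N (fun j => sin (2 * 0 * INR j)) (fun _ => 0)).
    rewrite !sumN_const. ring.
    intros; replace (2*0*INR k) with 0 by ring; apply sin_0.
    intros; replace (2*0*INR k) with 0 by ring; apply cos_0.
  - destruct (trig_sums N k l Hk Hl Hne) as [H1 H2]. fold h in H1, H2.
    rewrite H1, H2. ring.
Qed.

Lemma cmod_X_le N a b j : cmod (xre N a b j) (xim N a b j) <= sumN N (fun k => cmod (a k) (b k)).
Proof. unfold xre, xim. eapply Rle_trans; [apply cmod_sum|]. apply sumN_le. intros k _.
  right. apply cmod_rot. pose proof (sin2_cos2 (2 * PI * INR (j * k) / INR N)).
  unfold Rsqr in H. lra. Qed.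

Definition selv (sel : nat -> bool) (a : nat -> R) k := if sel k then a k else 0.
Definition selc (sel : nat -> bool) (a : nat -> R) k := if sel k then 0 else a k.

Lemma xre_split N a b sel j :
  xre N a b j = xre N (selv sel a) (selv sel b) j + xre N (selc sel a) (selc sel b) j.
Proof. unfold xre. rewrite <- sumN_plus. apply sumN_ext. intros k _. unfold selv, selc.
  destruct (sel k); ring. Qed.

Lemma xim_split N a b sel j :
  xim N a b j = xim N (selv sel a) (selv sel b) j + xim N (selc sel a) (selc sel b) j.
Proof. unfold xim. rewrite <- sumN_plus. apply sumN_ext. intros k _. unfold selv, selc.
  destruct (sel k); ring. Qed.

Lemma cmod_X_split N a b sel j :
  cmod (xre N a b j) (xim N a b j) <=
  cmod (xre N (selv sel a) (selv sel b) j) (xim N (selv sel a) (selv sel b) j)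
  + sumN N (fun k => if sel k then 0 else cmod (a k) (b k)).
Proof. rewrite (xre_split N a b sel j), (xim_split N a b sel j).
  eapply Rle_trans; [apply cmod_triangle|]. apply Rplus_le_compat_l.
  eapply Rle_trans; [apply cmod_X_le|]. apply sumN_le. intros k _. unfold selc.
  destruct (sel k). rewrite cmod_00; lra. lra. Qed.

Lemma parseval_sel N a b sel : (1 <= N)%nat ->
  sumN N (fun j => let X := cmod (xre N (selv sel a) (selv sel b) j) (xim N (selv sel a) (selv sel b) j) in X * X) =
  INR N * sumN N (fun k => if sel k then cmod (a k) (b k) * cmod (a k) (b k) else 0).
Proof. intros HN. simpl. rewrite (sumN_ext N _ _ (fun j _ => cmod_sq _ _)).
  rewrite parseval by auto. f_equal. apply sumN_ext. intros k _. unfold selv.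
  destruct (sel k). rewrite cmod_sq; auto. ring. Qed.

Lemma dyadic p u y M g : 0 < p -> 0 < u -> 0 <= y -> y <= 2 ^ (S M) * u ->
  (forall m, (m <= M)%nat -> 0 <= g m /\ (2 ^ m * u < y -> rpow (2 ^ m * u) p <= g m)) ->
  rpow y p <= rpow u p + rpow 2 p * sumN (S M) g.
Proof.
  intros Hp Hu Hy HyM Hg.
  assert (H2 : 0 < rpow 2 p) by (apply rpow_gt0; lra).
  destruct (Rle_dec y u).
  { assert (0 <= sumN (S M) g) by (apply sumN_nonneg; intros; apply Hg; lia).
    pose proof (rpow_le y u p ltac:(lra) r). nra. }
  cut (rpow y p <= rpow 2 p * sumN (S M) g). { pose proof (rpow_ge0 u p). lra. }
  assert (Hyu : u < y) by lra. clear n.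
  induction M.
  - destruct (Hg O (le_n _)) as [_ H]. simpl in H. rewrite Rmult_1_l in H. specialize (H Hyu).
    simpl sumN. rewrite Rplus_0_l.
    eapply Rle_trans. apply (rpow_le y (2*u) p); [lra| simpl in HyM; lra].
    rewrite rpow_mult by lra. apply Rmult_le_compat_l; lra.
  - change (sumN (S (S M)) g) with (sumN (S M) g + g (S M)).
    destruct (Hg (S M) (le_n _)) as [Hg0 Hg1].
    destruct (Rle_dec y (2 ^ S M * u)).
    + assert (rpow y p <= rpow 2 p * sumN (S M) g).
      { apply IHM; [lra| intros m Hm; apply Hg; lia]. }
      nra.
    + assert (Hlt : 2 ^ S M * u < y) by lra. specialize (Hg1 Hlt).
      assert (0 <= sumN (S M) g) by (apply sumN_nonneg; intros; apply Hg; lia).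
      assert (rpow y p <= rpow 2 p * rpow (2 ^ S M * u) p).
      { rewrite <- rpow_mult. apply rpow_le. lra.
        replace (2 ^ S (S M)) with (2 * 2 ^ S M) in HyM by (simpl; ring). lra. lra.
        pose proof (pow_le 2 (S M)). nra. }
      nra.
Qed.

Lemma geom e u r A M : 0 < e -> 0 < u -> 0 < r -> 0 < A ->
  let c := rpow 2 e / (rpow 2 e - 1) in
  sumN (S M) (fun m => if Rle_dec (2 ^ m * u * r) A then rpow (2 ^ m * u) e else 0)
  <= c * rpow (A / r) e.
Proof.
  intros He Hu Hr HA c.
  assert (H2 : 1 < rpow 2 e) by (apply rpow_2x; auto).
  assert (Hc1 : 1 <= c). { unfold c. apply (Rmult_le_reg_r (rpow 2 e - 1)). lra.
    field_simplify; lra. }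
  assert (Hc : c / rpow 2 e + 1 = c). { unfold c. field. lra. }
  assert (HT : 0 < A / r) by (unfold Rdiv; apply Rmult_lt_0_compat; auto; apply Rinv_0_lt_compat; auto).
  cut (forall M, sumN (S M) (fun m => if Rle_dec (2 ^ m * u * r) A then rpow (2 ^ m * u) e else 0)
        <= c * rpow (A / r) e /\
        sumN (S M) (fun m => if Rle_dec (2 ^ m * u * r) A then rpow (2 ^ m * u) e else 0)
        <= c * rpow (2 ^ M * u) e).
  { intros H; apply H. }
  clear M. intros M. induction M.
  - simpl sumN. rewrite Rplus_0_l. simpl pow. rewrite !Rmult_1_l.
    destruct (Rle_dec (u * r) A).
    + assert (u <= A / r). { apply (Rmult_le_reg_r r); auto. replace (A / r * r) with A by (field; lra). lra. }
      pose proof (rpow_le u (A/r) e ltac:(lra) H). pose proof (rpow_ge0 u e). split; nra.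
    + pose proof (rpow_ge0 u e). pose proof (rpow_ge0 (A/r) e). split; nra.
  - change (sumN (S (S M)) ?f) with (sumN (S M) f + f (S M)). cbv beta.
    destruct IHM as [I1 I2].
    assert (Ht : 0 < 2 ^ M * u) by (apply Rmult_lt_0_compat; auto; apply pow_lt; lra).
    assert (Hrt : rpow (2 ^ S M * u) e = rpow 2 e * rpow (2 ^ M * u) e).
    { rewrite <- rpow_mult by lra. f_equal. simpl; ring. }
    pose proof (rpow_ge0 (2 ^ M * u) e). pose proof (rpow_ge0 (A/r) e).
    destruct (Rle_dec (2 ^ S M * u * r) A).
    + assert (2 ^ S M * u <= A / r). { apply (Rmult_le_reg_r r); auto. replace (A / r * r) with A by (field; lra). lra. }
      pose proof (rpow_le _ _ e ltac:(lra) H1).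
      assert (sumN (S M) (fun m => if Rle_dec (2 ^ m * u * r) A then rpow (2 ^ m * u) e else 0)
          + rpow (2 ^ S M * u) e <= c * rpow (2 ^ S M * u) e).
      { rewrite Hrt.
        assert (Hc' : c * rpow (2 ^ M * u) e = (c - 1) * rpow 2 e * rpow (2 ^ M * u) e).
        { unfold c. field. lra. }
        lra. }
      split; nra.
    + split. lra. rewrite Hrt.
      assert (0 <= c * rpow (2 ^ M * u) e * (rpow 2 e - 1)) by (apply Rmult_le_pos; [apply Rmult_le_pos|]; lra).
      lra.
Qed.

Lemma sumN_ge_term n f k : (forall i, (i < n)%nat -> 0 <= f i) -> (k < n)%nat -> f k <= sumN n f.
Proof. induction n; intros H Hk; [lia|]. simpl. assert (0 <= sumN n f) by (apply sumN_nonneg; intros; apply H; lia).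
  destruct (Nat.eq_dec k n). subst. lra. assert (f k <= sumN n f) by (apply IHn; [intros; apply H|]; lia).
  pose proof (H n ltac:(lia)). lra. Qed.

Lemma pow2_ge n : INR n <= 2 ^ n.
Proof. induction n. simpl; lra. rewrite S_INR. simpl.
  assert (1 <= 2 ^ n) by (apply pow_R1_Rle; lra). lra. Qed.

Definition Cp (p : R) : R :=
  1 + 4 * rpow 2 p * rpow 2 (p - 2) * (rpow 2 (p - 2) / (rpow 2 (p - 2) - 1)).

Lemma Cp_ge1 p : 2 < p -> 1 <= Cp p.
Proof. intros Hp. unfold Cp. assert (1 < rpow 2 (p-2)) by (apply rpow_2x; lra).
  pose proof (rpow_ge0 2 p).
  assert (Hd : 0 <= rpow 2 (p - 2) / (rpow 2 (p - 2) - 1)).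
  { unfold Rdiv. apply Rmult_le_pos. lra. left; apply Rinv_0_lt_compat; lra. }
  assert (0 <= 4 * rpow 2 p * rpow 2 (p - 2) * (rpow 2 (p - 2) / (rpow 2 (p - 2) - 1))).
  { apply Rmult_le_pos; [|exact Hd]. repeat apply Rmult_le_pos; lra. } lra. Qed.

Section HY.
Variables (p : R) (N : nat) (a b : nat -> R).
Hypothesis Hp : 2 < p.
Hypothesis HN : (1 <= N)%nat.

Let e1 := / (p - 1).
Let q := p / (p - 1).
Let cm k := cmod (a k) (b k).
Let Q := sumN N (fun k => rpow (cm k) q).

Lemma q_eq : q = 1 + e1.
Proof. unfold q, e1. field. lra. Qed.

Lemma rpow_q x : 0 <= x -> rpow x q = x * rpow x e1.
Proof. intros Hx. rewrite q_eq, rpow_plus, rpow_1; auto. Qed.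

Lemma big_bound t : 0 < t -> 0 < Q ->
  sumN N (fun k => if Rle_dec (t * rpow (cm k) e1) (2 * Q) then 0 else cm k) <= t / 2.
Proof.
  intros Ht HQ.
  apply Rle_trans with (sumN N (fun k => rpow (cm k) q * (t / (2 * Q)))).
  - apply sumN_le. intros k _. pose proof (cmod_ge0 (a k) (b k)) as Hc. fold (cm k) in Hc.
    destruct (Rle_dec (t * rpow (cm k) e1) (2 * Q)).
    + apply Rmult_le_pos. apply rpow_ge0. unfold Rdiv; apply Rmult_le_pos; [lra|left; apply Rinv_0_lt_compat; lra].
    + rewrite rpow_q by auto. 
      assert (Hr : 0 <= rpow (cm k) e1) by apply rpow_ge0.
      assert (cm k * (t * rpow (cm k) e1) >= cm k * (2 * Q)) by (apply Rle_ge, Rmult_le_compat_l; lra).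
      apply (Rmult_le_reg_r (2 * Q)). lra.
      replace (cm k * rpow (cm k) e1 * (t / (2 * Q)) * (2 * Q)) with (cm k * (t * rpow (cm k) e1)) by (field; lra).
      lra.
  - rewrite (sumN_ext N _ (fun k => (t / (2 * Q)) * rpow (cm k) q)) by (intros; ring).
    rewrite sumN_scal. fold Q. right. field. lra.
Qed.

Lemma small_bound k u M : 0 < u -> 0 < Q ->
  sumN (S M) (fun m => if Rle_dec (2 ^ m * u * rpow (cm k) e1) (2 * Q) then cm k * cm k * rpow (2 ^ m * u) (p - 2) else 0)
  <= (rpow 2 (p - 2) / (rpow 2 (p - 2) - 1)) * rpow (2 * Q) (p - 2) * rpow (cm k) q.
Proof.
  intros Hu HQ. pose proof (cmod_ge0 (a k) (b k)) as Hc. fold (cm k) in Hc.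
  assert (Hcg : 0 <= rpow 2 (p - 2) / (rpow 2 (p - 2) - 1)).
  { assert (1 < rpow 2 (p-2)) by (apply rpow_2x; lra).
    unfold Rdiv. apply Rmult_le_pos. lra. left; apply Rinv_0_lt_compat; lra. }
  destruct (Req_dec (cm k) 0) as [H0|H0].
  - rewrite H0. rewrite (sumN_ext _ _ (fun _ => 0)). rewrite sumN_const. rewrite (rpow_nonpos 0 q) by lra. lra.
    intros m _. destruct (Rle_dec _ _); ring.
  - set (r := rpow (cm k) e1).
    assert (Hr : 0 < r) by (apply rpow_gt0; lra).
    rewrite (sumN_ext _ _ (fun m => cm k * cm k * (if Rle_dec (2 ^ m * u * r) (2 * Q) then rpow (2 ^ m * u) (p - 2) else 0))).
    2:{ intros m _. destruct (Rle_dec _ _); ring. }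
    rewrite sumN_scal.
    pose proof (geom (p - 2) u r (2 * Q) M ltac:(lra) Hu Hr ltac:(lra)) as G. simpl in G.
    assert (Hcc : 0 <= cm k * cm k) by nra.
    eapply Rle_trans. apply Rmult_le_compat_l. exact Hcc. exact G.
    right.
    unfold Rdiv at 2. rewrite rpow_mult by (try lra; left; apply Rinv_0_lt_compat; lra).
    rewrite rpow_inv by auto. unfold r. rewrite rpow_rpow by lra.
    assert (E : rpow (cm k) q * rpow (cm k) (e1 * (p - 2)) = cm k * cm k).
    { rewrite <- rpow_plus by lra. rewrite <- rpow_2 by lra. f_equal. unfold q, e1. field. lra. }
    assert (0 < rpow (cm k) (e1 * (p - 2))) by (apply rpow_gt0; lra).
    assert (1 < rpow 2 (p-2)) by (apply rpow_2x; lra).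
    rewrite <- E. field. split; lra.
Qed.


Definition selm (u : R) (m : nat) : nat -> bool :=
  fun k => if Rle_dec (2 ^ m * u * rpow (cm k) e1) (2 * Q) then true else false.

Lemma sum_rearr u M :
  sumN (S M) (fun m => 4 * rpow (2 ^ m * u) (p - 2) *
     (INR N * sumN N (fun k => if selm u m k then cmod (a k) (b k) * cmod (a k) (b k) else 0)))
  = 4 * INR N * sumN N (fun k => sumN (S M) (fun m =>
      if Rle_dec (2 ^ m * u * rpow (cm k) e1) (2 * Q) then cm k * cm k * rpow (2 ^ m * u) (p - 2) else 0)).
Proof.
  rewrite sumN_swap, <- sumN_scal. apply sumN_ext. intros m _.
  rewrite (sumN_ext N (fun k => if Rle_dec (2 ^ m * u * rpow (cm k) e1) (2 * Q) then cm k * cm k * rpow (2 ^ m * u) (p - 2) else 0)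
     (fun k => rpow (2 ^ m * u) (p - 2) * (if selm u m k then cmod (a k) (b k) * cmod (a k) (b k) else 0))).
  rewrite sumN_scal. ring.
  intros k _. unfold selm. destruct (Rle_dec _ _); unfold cm; ring.
Qed.

Theorem HY_main : xnorm_pp N a b p <= INR N * Cp p * rpow Q (p - 1).
Proof.
  assert (HNp : 0 < INR N) by (apply lt_0_INR; lia).
  assert (Hcm : forall k, 0 <= cm k) by (intros; apply cmod_ge0).
  assert (HQ0 : 0 <= Q) by (apply sumN_nonneg; intros; apply rpow_ge0).
  pose proof (Cp_ge1 p Hp) as HC.
  unfold xnorm_pp.
  destruct (Rle_dec Q 0) as [HQ|HQ].
  - assert (Hz : forall k, (k < N)%nat -> cm k = 0).
    { intros k Hk. destruct (Req_dec (cm k) 0); auto. exfalso.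
      assert (0 < rpow (cm k) q) by (apply rpow_gt0; specialize (Hcm k); lra).
      assert (rpow (cm k) q <= Q) by (apply (sumN_ge_term N (fun k => rpow (cm k) q)); auto; intros; apply rpow_ge0).
      lra. }
    rewrite (sumN_ext N _ (fun _ => 0)). rewrite sumN_const.
    assert (0 <= rpow Q (p-1)) by apply rpow_ge0.
    assert (0 <= INR N * Cp p) by (apply Rmult_le_pos; lra).
    rewrite Rmult_0_r. apply Rmult_le_pos; lra.
    intros j _. apply rpow_nonpos.
    eapply Rle_trans. apply cmod_X_le. rewrite (sumN_ext N _ (fun _ => 0)).
    rewrite sumN_const; lra. intros; apply Hz; auto.
  - assert (HQp : 0 < Q) by lra. clear HQ.
    set (u := rpow Q ((p - 1) / p)).
    assert (Hu : 0 < u) by (apply rpow_gt0; auto).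
    assert (Hup : rpow u p = rpow Q (p - 1)).
    { unfold u. rewrite rpow_rpow by lra. f_equal. field. lra. }
    set (S1 := sumN N cm).
    destruct (INR_unbounded (S1 / u)) as [M HM].
    assert (HM2 : S1 <= 2 ^ S M * u).
    { pose proof (pow2_ge M). assert (2 ^ M <= 2 ^ S M) by (simpl; assert (0 < 2^M) by (apply pow_lt; lra); lra).
      assert (S1 / u * u = S1) by (field; lra). nra. }
    set (Xs := fun m j => cmod (xre N (selv (selm u m) a) (selv (selm u m) b) j)
                               (xim N (selv (selm u m) a) (selv (selm u m) b) j)).
    assert (St1 : forall j, (j < N)%nat ->
      rpow (cmod (xre N a b j) (xim N a b j)) p <=
      rpow u p + rpow 2 p * sumN (S M) (fun m => 4 * rpow (2 ^ m * u) (p - 2) * (Xs m j * Xs m j))).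
    { intros j Hj. apply dyadic; try lra. apply cmod_ge0.
      eapply Rle_trans. apply cmod_X_le. exact HM2.
      intros m Hm. split.
      - apply Rmult_le_pos. apply Rmult_le_pos. lra. apply rpow_ge0. nra.
      - intros Hlt. set (t := 2 ^ m * u) in *.
        assert (Ht : 0 < t) by (unfold t; apply Rmult_lt_0_compat; auto; apply pow_lt; lra).
        pose proof (cmod_X_split N a b (selm u m) j) as Hs.
        assert (Hb : sumN N (fun k => if selm u m k then 0 else cmod (a k) (b k)) <= t / 2).
        { eapply Rle_trans; [|apply (big_bound t Ht HQp)]. right. apply sumN_ext. intros k _.
          unfold selm, t. destruct (Rle_dec _ _); reflexivity. }
        fold (Xs m j) in Hs.
        assert (HX : t / 2 < Xs m j) by lra.
        assert (t * t <= 4 * (Xs m j * Xs m j)) by nra.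
        replace p with ((p - 2) + 2) at 1 by ring. rewrite rpow_plus, rpow_2 by lra.
        pose proof (rpow_ge0 t (p - 2)). nra. }
    eapply Rle_trans. apply sumN_le. exact St1.
    rewrite sumN_plus, sumN_const, sumN_scal, sumN_swap.
    rewrite (sumN_ext (S M) (fun m => sumN N (fun j => 4 * rpow (2 ^ m * u) (p - 2) * (Xs m j * Xs m j)))
      (fun m => 4 * rpow (2 ^ m * u) (p - 2) *
     (INR N * sumN N (fun k => if selm u m k then cmod (a k) (b k) * cmod (a k) (b k) else 0)))).
    2:{ intros m _. rewrite sumN_scal. f_equal. pose proof (parseval_sel N a b (selm u m) HN) as P.
        cbv zeta in P. exact P. }
    rewrite sum_rearr.
    assert (Hk : sumN N (fun k => sumN (S M) (fun m =>
      if Rle_dec (2 ^ m * u * rpow (cm k) e1) (2 * Q) then cm k * cm k * rpow (2 ^ m * u) (p - 2) else 0))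
      <= (rpow 2 (p - 2) / (rpow 2 (p - 2) - 1)) * rpow (2 * Q) (p - 2) * Q).
    { apply Rle_trans with (sumN N (fun k => (rpow 2 (p - 2) / (rpow 2 (p - 2) - 1)) * rpow (2 * Q) (p - 2) * rpow (cm k) q)).
      apply sumN_le. intros k _. apply small_bound; auto.
      rewrite sumN_scal. right. reflexivity. }
    assert (Hq2 : rpow (2 * Q) (p - 2) * Q = rpow 2 (p - 2) * rpow Q (p - 1)).
    { rewrite rpow_mult by lra. replace (p - 1) with ((p - 2) + 1) by ring.
      rewrite rpow_plus, rpow_1 by lra. ring. }
    rewrite Hup. unfold Cp.
    assert (H2p : 0 < rpow 2 p) by (apply rpow_gt0; lra).
    assert (0 < 4 * INR N) by lra.
    set (cg := rpow 2 (p - 2) / (rpow 2 (p - 2) - 1)) in *.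
    assert (Hfin : rpow 2 p * (4 * INR N * sumN N (fun k => sumN (S M) (fun m =>
      if Rle_dec (2 ^ m * u * rpow (cm k) e1) (2 * Q) then cm k * cm k * rpow (2 ^ m * u) (p - 2) else 0)))
      <= rpow 2 p * (4 * INR N * (cg * rpow (2 * Q) (p - 2) * Q))).
    { apply Rmult_le_compat_l. lra. apply Rmult_le_compat_l; lra. }
    eapply Rle_trans. apply Rplus_le_compat_l. exact Hfin.
    right. rewrite Rmult_assoc with (r1 := cg), Hq2. ring.
Qed.

End HY.

Definition Cp' (p : R) : R := if Rle_dec p 2 then 1 else Cp p.

Theorem HY_all p N a b : 2 <= p -> (1 <= N)%nat ->
  xnorm_pp N a b p <= INR N * Cp' p * rpow (sumN N (fun k => rpow (cmod (a k) (b k)) (p / (p - 1)))) (p - 1).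
Proof.
  intros Hp HN. unfold Cp'. destruct (Rle_dec p 2).
  - assert (p = 2) by lra. subst p.
    replace (2 / (2 - 1)) with 2 by field. replace (2 - 1) with 1 by ring.
    rewrite rpow_1 by (apply sumN_nonneg; intros; apply rpow_ge0).
    unfold xnorm_pp. right.
    rewrite (sumN_ext N _ (fun j => xre N a b j * xre N a b j + xim N a b j * xim N a b j)).
    rewrite parseval by auto. rewrite Rmult_1_r. f_equal. apply sumN_ext. intros k _.
    rewrite rpow_2 by apply cmod_ge0. symmetry; apply cmod_sq.
    intros j _. rewrite rpow_2 by apply cmod_ge0. apply cmod_sq.
  - apply HY_main; auto; lra.
Qed.

Lemma sin_lb_ge a : 0 <= a -> a <= 2 -> a / 3 <= sin_lb a.
Proof. intros. unfold sin_lb, sin_approx. cbv [sum_f_R0]. unfold sin_term.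
  rewrite !INR_IZR_INZ.
  replace (Z.of_nat (fact (2*0+1))) with 1%Z by reflexivity.
  replace (Z.of_nat (fact (2*1+1))) with 6%Z by reflexivity.
  replace (Z.of_nat (fact (2*2+1))) with 120%Z by reflexivity.
  replace (Z.of_nat (fact (2*3+1))) with 5040%Z by reflexivity.
  simpl pow.
  assert (0 <= a*a <= 4) by nra.
  assert (a*a*a*a*a*a*a/5040 <= a*a*a*a*a/120). { unfold Rdiv.
    assert (0 <= a*a*a*a*a) by (repeat apply Rmult_le_pos; lra). nra. }
  assert (a*a*a/6 <= 2/3*a) by nra.
  nra.
Qed.

Lemma sin_lower x : 0 <= x -> x <= PI / 2 -> x / 3 <= sin x.
Proof. intros H1 H2. pose proof PI_4. pose proof PI_RGT_0.
  eapply Rle_trans. apply sin_lb_ge; lra. apply SIN; lra. Qed.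

Lemma lam_bound mu N k : 1 < mu -> (3 <= N)%nat -> (1 <= k < N)%nat ->
  (mu - 1) / 9 * (INR (Nat.min k (N - k)) * INR (Nat.min k (N - k))) <= lambda (mu * gamma1 N) N k.
Proof.
  intros Hmu HN Hk. set (m := Nat.min k (N - k)).
  assert (Hm1 : (1 <= m)%nat) by (unfold m; lia).
  assert (Hm2 : (2 * m <= N)%nat) by (unfold m; lia).
  assert (HNr : 3 <= INR N) by (replace 3 with (INR 3) by (simpl; lra); apply le_INR; auto).
  assert (Hmr1 : 1 <= INR m) by (replace 1 with (INR 1) by reflexivity; apply le_INR; auto).
  assert (Hmr2 : 2 * INR m <= INR N) by (replace 2 with (INR 2) by reflexivity; rewrite <- mult_INR; apply le_INR; auto).
  pose proof PI_RGT_0 as Hpi.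
  assert (Hs : sin (INR k * PI / INR N) = sin (INR m * PI / INR N)).
  { unfold m. destruct (Nat.min_spec k (N - k)) as [[_ ->]|[_ ->]]. reflexivity.
    rewrite minus_INR by lia. rewrite <- sin_PI_x. f_equal. field. lra. }
  unfold lambda, gamma1. rewrite Hs.
  set (x1 := PI / INR N). set (xm := INR m * PI / INR N).
  assert (Hx1 : 0 < x1) by (unfold x1; apply Rdiv_lt_0_compat; lra).
  assert (Hxm : xm = INR m * x1) by (unfold xm, x1; field; lra).
  assert (Hx1m : x1 <= xm) by nra.
  assert (Hxm2 : xm <= PI / 2).
  { rewrite Hxm. unfold x1. apply (Rmult_le_reg_r (INR N)). lra.
    replace (INR m * (PI / INR N) * INR N) with (INR m * PI) by (field; lra). nra. }
  assert (Hs1 : 0 < sin x1) by (apply sin_gt_0; lra).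
  assert (Hs1x : sin x1 < x1) by (apply sin_lt_x; auto).
  assert (Hsm1 : sin x1 <= sin xm) by (apply sin_incr_1; lra).
  assert (Hsm2 : xm / 3 <= sin xm) by (apply sin_lower; lra).
  set (R := sin xm / sin x1).
  assert (HR1 : 1 <= R) by (unfold R; apply (Rmult_le_reg_r (sin x1)); auto; field_simplify; lra).
  assert (HR2 : INR m / 3 <= R).
  { unfold R. apply (Rmult_le_reg_r (sin x1)); auto. replace (sin xm / sin x1 * sin x1) with (sin xm) by (field; lra).
    assert (INR m / 3 * sin x1 <= INR m / 3 * x1) by (apply Rmult_le_compat_l; lra). nra. }
  assert (E : -1 + 2 * (mu * / (2 * sin x1 ^ 2)) * sin xm ^ 2 = -1 + mu * (R * R)).
  { unfold R. field. lra. }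
  rewrite E.
  destruct (Rle_dec (INR m * INR m) 9).
  - assert ((mu - 1) / 9 * (INR m * INR m) <= mu - 1).
    { apply (Rmult_le_reg_r 9). lra. field_simplify. nra. }
    assert (1 <= R * R) by nra. assert (mu * 1 <= mu * (R * R)) by (apply Rmult_le_compat_l; lra).
    lra.
  - assert (INR m / 3 * (INR m / 3) <= R * R) by (apply Rmult_le_compat; lra).
    assert (mu * (INR m / 3 * (INR m / 3)) <= mu * (R * R)) by (apply Rmult_le_compat_l; lra).
    lra.
Qed.

Lemma Q_bound (mu p : R) (rho : nat -> R) (l : R) (N : nat) (delta : R) (a b : nat -> R) :
  1 < mu -> 2 <= p -> (forall k, (1 <= k)%nat -> 0 < rho k) ->
  (forall n, sumN n (fun k => rpow (rho (S k) / INR (S k)) (p / (p - 1))) <= l) ->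
  (3 <= N)%nat -> 0 < delta ->
  (forall k, (k < N)%nat ->
    cmod (a k) (b k) <= delta * rkN rho N k / sqrt (Rabs (lambda (mu * gamma1 N) N k))) ->
  sumN N (fun k => rpow (cmod (a k) (b k)) (p / (p - 1)))
  <= rpow delta (p / (p - 1)) * (1 + 2 * rpow (/ sqrt ((mu - 1) / 9)) (p / (p - 1)) * l).
Proof.
  intros Hmu Hp Hrho Hl HN Hd Hc.
  set (q := p / (p - 1)) in *.
  assert (Hq : 0 < q) by (unfold q; apply Rdiv_lt_0_compat; lra).
  set (eps := (mu - 1) / 9).
  assert (Heps : 0 < eps) by (unfold eps; lra).
  set (C := rpow (/ sqrt eps) q).
  set (f := fun m => rpow (rho m / INR m) q).
  assert (Hf : forall m, 0 <= f m) by (intros; apply rpow_ge0).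
  assert (HC : 0 <= C) by apply rpow_ge0.
  assert (Hdq : 0 <= rpow delta q) by apply rpow_ge0.
  assert (Hl0 : 0 <= l) by (apply Rle_trans with (sumN 0 (fun k => f (S k))); [simpl; lra| apply Hl]).
  apply Rle_trans with (sumN N (fun k => rpow delta q *
     ((if Nat.eq_dec 0 k then 1 else 0) + C * ((if Nat.eq_dec 0 k then 0 else f k)
        + (if Nat.eq_dec 0 k then 0 else f (N - k)%nat))))).
  - apply sumN_le. intros k Hk. specialize (Hc k Hk).
    destruct (Nat.eq_dec 0 k) as [<-|Hk0].
    + unfold rkN in Hc. simpl in Hc. unfold lambda in Hc.
      replace (INR 0 * PI / INR N) with 0 in Hc by (simpl; field; apply not_0_INR; lia).
      rewrite sin_0 in Hc. replace (-1 + 2 * (mu * gamma1 N) * 0 ^ 2) with (-1) in Hc by ring.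
      replace (Rabs (-1)) with 1 in Hc by (unfold Rabs; destruct (Rcase_abs (-1)); lra). rewrite sqrt_1 in Hc.
      replace (rpow delta q * (1 + C * (0 + 0))) with (rpow delta q) by ring.
      apply rpow_le; lra.
    + set (m := Nat.min k (N - k)).
      assert (Hm1 : (1 <= m)%nat) by (unfold m; lia).
      assert (HL := lam_bound mu N k Hmu HN ltac:(lia)). fold m in HL.
      assert (Hmr : 1 <= INR m) by (replace 1 with (INR 1) by reflexivity; apply le_INR; auto).
      assert (Hrk : rkN rho N k = rho m).
      { unfold rkN. destruct (Nat.eqb_spec k 0); [lia|reflexivity]. }
      rewrite Hrk in Hc. pose proof (Hrho m Hm1) as Hrm.
      assert (Hlam : 0 < lambda (mu * gamma1 N) N k).
      { eapply Rlt_le_trans; [|exact HL]. fold eps. apply Rmult_lt_0_compat; nra. }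
      rewrite Rabs_right in Hc by lra.
      assert (Hsq : sqrt eps * INR m <= sqrt (lambda (mu * gamma1 N) N k)).
      { rewrite <- (sqrt_square (INR m)) by lra. rewrite <- sqrt_mult_alt by lra.
        apply sqrt_le_1_alt. exact HL. }
      assert (Hse : 0 < sqrt eps) by (apply sqrt_lt_R0; auto).
      assert (Hc2 : cmod (a k) (b k) <= delta * / sqrt eps * (rho m / INR m)).
      { eapply Rle_trans. exact Hc. unfold Rdiv.
        replace (delta * / sqrt eps * (rho m * / INR m)) with (delta * rho m * / (sqrt eps * INR m))
          by (field; split; lra).
        apply Rmult_le_compat_l. apply Rmult_le_pos; lra.
        apply Rinv_le_contravar. apply Rmult_lt_0_compat; lra. exact Hsq. }
      eapply Rle_trans. apply rpow_le. lra. exact Hc2.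
      rewrite rpow_mult, rpow_mult.
      2,3,4,5: try apply Rmult_le_pos; try apply Rdiv_le_0_compat; try left; try apply Rinv_0_lt_compat; lra.
      fold C. change (rpow (rho m / INR m) q) with (f m).
      assert (Hfm : f m <= f k + f (N - k)%nat).
      { unfold m. destruct (Nat.min_spec k (N - k)) as [[_ ->]|[_ ->]]; pose proof (Hf k); pose proof (Hf (N-k)%nat); lra. }
      assert (C * f m <= C * (f k + f (N - k)%nat)) by (apply Rmult_le_compat_l; auto).
      assert (rpow delta q * (C * f m) <= rpow delta q * (C * (f k + f (N - k)%nat))) by (apply Rmult_le_compat_l; auto).
      lra.
  - rewrite sumN_scal. apply Rmult_le_compat_l; auto.
    rewrite sumN_plus, sumN_scal, sumN_plus.
    rewrite (sumN_delta N 0 (fun _ => 1)) by lia.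
    destruct N as [|N']; [lia|].
    assert (H1 : sumN (S N') (fun k => if Nat.eq_dec 0 k then 0 else f k) <= l).
    { rewrite sumN_shift. rewrite (sumN_ext N' _ (fun k => f (S k))) by (intros; destruct (Nat.eq_dec 0 (S k)); [lia|reflexivity]).
      destruct (Nat.eq_dec 0 0); [|lia].
      eapply Rle_trans; [|apply (Hl (S N'))].
      change (0 + sumN N' (fun k => f (S k)) <= sumN N' (fun k => f (S k)) + f (S N')).
      pose proof (Hf (S N')). lra. }
    assert (H2 : sumN (S N') (fun k => if Nat.eq_dec 0 k then 0 else f (S N' - k)%nat) <= l).
    { rewrite sumN_refl. eapply Rle_trans; [|apply (Hl (S N'))]. apply sumN_le. intros k Hk.
      destruct (Nat.eq_dec 0 (S N' - 1 - k)). apply Hf.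
      replace (S N' - (S N' - 1 - k))%nat with (S k) by lia. apply Rle_refl. }
    assert (C * (sumN (S N') (fun k => if Nat.eq_dec 0 k then 0 else f k) +
       sumN (S N') (fun k => if Nat.eq_dec 0 k then 0 else f (S N' - k)%nat)) <= C * (l + l))
      by (apply Rmult_le_compat_l; lra).
    lra.
Qed.

Theorem lemma4p3 (mu p : R) (rho : nat -> R) :
  1 < mu ->
  2 <= p ->
  (forall k, (1 <= k)%nat -> 0 < rho k) ->
  (forall k, (1 <= k)%nat -> rho k <= rho (S k)) ->
  Kq_finite rho (p / (p - 1)) ->
  exists Bp : R,
    forall (N : nat) (delta : R) (a b : nat -> R),
      (3 <= N)%nat ->
      0 < delta ->
      in_Cdelta (mu * gamma1 N) rho delta N a b ->
      xnorm_pp N a b p <= rpow delta p * INR N * Bp.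
Proof.
  intros Hmu Hp Hrho _ [l Hl].
  set (q := p / (p - 1)) in *.
  assert (Hgr : Un_growing (fun n => sum_f_R0 (fun k => rpow (rho (S k) / INR (S k)) q) n)).
  { intros n. cbn [sum_f_R0]. pose proof (rpow_ge0 (rho (S (S n)) / INR (S (S n))) q). lra. }
  assert (Hl' : forall n, sumN n (fun k => rpow (rho (S k) / INR (S k)) q) <= l).
  { intros [|n]. change (0 <= l). pose proof (growing_ineq _ _ Hgr Hl 0) as H. cbn [sum_f_R0] in H.
    pose proof (rpow_ge0 (rho 1%nat / INR 1) q). lra.
    rewrite sumN_sum_f. apply growing_ineq; auto. }
  set (K' := 1 + 2 * rpow (/ sqrt ((mu - 1) / 9)) q * l).
  exists (Cp' p * rpow K' (p - 1)).
  intros N delta a b HN Hd [_ Hc].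
  pose proof (Q_bound mu p rho l N delta a b Hmu Hp Hrho Hl' HN Hd Hc) as HQ. fold q K' in HQ.
  pose proof (HY_all p N a b Hp ltac:(lia)) as HY. fold q in HY.
  eapply Rle_trans. exact HY.
  assert (HCp : 0 <= Cp' p).
  { unfold Cp'. destruct (Rle_dec p 2). lra. pose proof (Cp_ge1 p ltac:(lra)). lra. }
  assert (HNr : 0 <= INR N) by apply pos_INR.
  assert (HK : 0 <= K').
  { pose proof (Hl' 0%nat) as H0. simpl in H0. unfold K'.
    pose proof (rpow_ge0 (/ sqrt ((mu - 1) / 9)) q).
    assert (0 <= 2 * rpow (/ sqrt ((mu - 1) / 9)) q * l) by (apply Rmult_le_pos; lra). lra. }
  assert (Hr : rpow (sumN N (fun k => rpow (cmod (a k) (b k)) q)) (p - 1) <= rpow delta p * rpow K' (p - 1)).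
  { eapply Rle_trans. apply rpow_le. lra. exact HQ.
    rewrite rpow_mult, rpow_rpow by (try apply rpow_ge0; lra).
    replace (q * (p - 1)) with p by (unfold q; field; lra). lra. }
  assert (INR N * Cp' p * rpow (sumN N (fun k => rpow (cmod (a k) (b k)) q)) (p - 1)
     <= INR N * Cp' p * (rpow delta p * rpow K' (p - 1))).
  { apply Rmult_le_compat_l. apply Rmult_le_pos; auto. exact Hr. }
  lra.
Qed.
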